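(* Let $W$ be a binary MAC with 2 users, let $X[1],X[2]$ be i.i.d. uniform on $\mathbb{F}_2$ and let $Y$ be the output of $W$ on input $(X[1],X[2])$. Consider the triples $$I=\big(I(X[1];Y,X[2]),\,I(X[2];Y,X[1]),\,I(X[1],X[2];Y)\big),\qquad J=\big(I(X[1];Y),\,I(X[2];Y),\,I(X[1]+X[2];Y)\big).$$ If all entries of $I$ are integers, then all entries of $J$ lie in $\{0,1\}$ and $J$ is uniquely determined by $I$ (any two such MACs with the same integer triple $I$ have the same $J$). Conversely, if all entries of $J$ lie in $\{0,1\}$, then all entries of $I$ are integers and $I$ is uniquely determined by $J$.
   Context: A binary MAC with 2 users is a channel $W$ with input alphabet $\mathbb{F}_2^2$ and finite output alphabet. Mutual information is in bits; $X[1]+X[2]$ is addition in $\mathbb{F}_2$. *)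

(* Defs.v *)
From HB Require Import structures.
From mathcomp Require Import all_boot all_order all_algebra.
From mathcomp Require Import reals exp.
Set Implicit Arguments. Unset Strict Implicit. Unset Printing Implicit Defensive.
Import Order.TTheory GRing.Theory Num.Theory.
Local Open Scope ring_scope.

Section Info.
Variable R : realType.

Definition log2 (x : R) : R := ln x / ln 2.

Definition probOf (T A : finType) (p : T -> R) (f : T -> A) (a : A) : R :=
  \sum_(t : T | f t == a) p t.

Definition mutinfo (T A B : finType) (p : T -> R) (f : T -> A) (g : T -> B) : R :=
  \sum_(a : A) \sum_(b : B)
    let pab := probOf p (fun t => (f t, g t)) (a, b) in
    if pab == 0 then 0
    else pab * log2 (pab / (probOf p f a * probOf p g b)).

(* a binary MAC with 2 users: input alphabet F_2^2 (= bool * bool, with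
   addition in F_2 being xor), finite output alphabet Y, transition W x1 x2 y *)
Definition is_MAC (Y : finType) (W : bool -> bool -> Y -> R) : Prop :=
  (forall x1 x2 y, 0 <= W x1 x2 y) /\ (forall x1 x2, \sum_(y : Y) W x1 x2 y = 1).

(* joint pmf of (X[1], X[2], Y) with X[1], X[2] iid uniform on F_2 *)
Definition macP (Y : finType) (W : bool -> bool -> Y -> R) (t : bool * bool * Y) : R :=
  W t.1.1 t.1.2 t.2 / 4.

Definition rvX1 (Y : finType) (t : bool * bool * Y) : bool := t.1.1.
Definition rvX2 (Y : finType) (t : bool * bool * Y) : bool := t.1.2.
Definition rvY  (Y : finType) (t : bool * bool * Y) : Y := t.2.

Definition Itriple (Y : finType) (W : bool -> bool -> Y -> R) : R * R * R :=
  (mutinfo (macP W) (@rvX1 Y) (fun t => (rvY t, rvX2 t)),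
   mutinfo (macP W) (@rvX2 Y) (fun t => (rvY t, rvX1 t)),
   mutinfo (macP W) (fun t => (rvX1 t, rvX2 t)) (@rvY Y)).

Definition Jtriple (Y : finType) (W : bool -> bool -> Y -> R) : R * R * R :=
  (mutinfo (macP W) (@rvX1 Y) (@rvY Y),
   mutinfo (macP W) (@rvX2 Y) (@rvY Y),
   mutinfo (macP W) (fun t => addb (rvX1 t) (rvX2 t)) (@rvY Y)).

Definition isInt (x : R) : Prop := exists z : int, x = z%:~R.
Definition is01 (x : R) : Prop := x = 0 \/ x = 1.

Definition triple_all (P : R -> Prop) (v : R * R * R) : Prop :=
  [/\ P v.1.1, P v.1.2 & P v.2].

End Info.

(* Main.v *)
Require Import Defs.
From HB Require Import structures.
From mathcomp Require Import all_boot all_order all_algebra.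
From mathcomp Require Import reals exp.
From mathcomp Require Import ring lra.
Import Order.TTheory GRing.Theory Num.Theory.
Set Implicit Arguments. Unset Strict Implicit. Unset Printing Implicit Defensive.
Local Open Scope ring_scope.


Section Analytic.
Variable R : realType.
Implicit Types (x y t u v : R).

Definition Fx (x : R) := x * log2 x.
Definition Dv (u v : R) := u + v + Fx u + Fx v - Fx (u + v).

Lemma Fx0 : Fx 0 = 0. Proof. by rewrite /Fx mul0r. Qed.

Lemma ln2_gt0 : 0 < ln (2 : R). Proof. by apply: ln_gt0; lra. Qed.

Lemma ln_le t : 0 < t -> ln t <= t - 1.
Proof.
move=> t0; have := expR_ge1Dx (ln t); rewrite lnK ?posrE //; lra.
Qed.

Lemma ln_lt t : 0 < t -> t != 1 -> ln t < t - 1.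
Proof.
move=> t0 t1; have : ln t != 0 by rewrite ln_eq0.
move=> /expR_gt1Dx; rewrite lnK ?posrE //; lra.
Qed.

Lemma key_le x y : 0 < x -> 0 < y -> x * (ln y - ln x) <= y - x.
Proof.
move=> x0 y0; rewrite -ln_div ?posrE //.
have h := ln_le (divr_gt0 y0 x0).
have -> : y - x = x * (y / x - 1) by field; apply: lt0r_neq0.
by rewrite ler_wpM2l // ltW.
Qed.

Lemma key_lt x y : 0 < x -> 0 < y -> x != y -> x * (ln y - ln x) < y - x.
Proof.
move=> x0 y0 xy; rewrite -ln_div ?posrE //.
have : y / x != 1.
  apply/negP => /eqP h; move/negP: xy; apply; apply/eqP.
  have : y = (y / x) * x by rewrite mulfVK // lt0r_neq0.
  by rewrite h mul1r.
move=> /(ln_lt (divr_gt0 y0 x0)) h.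
have -> : y - x = x * (y / x - 1) by field; apply: lt0r_neq0.
by rewrite ltr_pM2l.
Qed.

Lemma Dv_ln u v : Dv u v * ln 2 =
  (u + v) * ln 2 + u * ln u + v * ln v - (u + v) * ln (u + v).
Proof.
have h := ln2_gt0; rewrite /Dv /Fx /log2; field; exact: lt0r_neq0.
Qed.

Lemma Dv_0l v : Dv 0 v = v.
Proof. by rewrite /Dv add0r Fx0; ring. Qed.
Lemma Dv_0r u : Dv u 0 = u.
Proof. by rewrite /Dv addr0 Fx0; ring. Qed.

Lemma ln2x x : 0 < x -> ln (2 * x) = ln 2 + ln x.
Proof. by move=> x0; rewrite lnM ?posrE //; lra. Qed.

Lemma Dv_pos_facts u v : 0 < u -> 0 < v ->
  (2 * u) * (ln (u + v) - (ln 2 + ln u)) <= (u + v) - 2 * u /\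
  (2 * v) * (ln (u + v) - (ln 2 + ln v)) <= (u + v) - 2 * v.
Proof.
move=> u0 v0; rewrite -!ln2x //; split; apply: key_le; lra.
Qed.

Lemma Dv_ge0 u v : 0 <= u -> 0 <= v -> 0 <= Dv u v.
Proof.
rewrite le0r => /orP[/eqP->|u0]; first by rewrite Dv_0l.
rewrite le0r => /orP[/eqP->|v0]; first by rewrite Dv_0r ltW.
have [h1 h2] := Dv_pos_facts u0 v0.
have e := Dv_ln u v.
rewrite -(pmulr_lge0 _ ln2_gt0) e.
nra.
Qed.

Lemma Dv_eq0 u v : 0 <= u -> 0 <= v -> Dv u v = 0 -> u = v.
Proof.
rewrite le0r => /orP[/eqP->|u0]; first by rewrite Dv_0l.
rewrite le0r => /orP[/eqP->|v0]; first by rewrite Dv_0r.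
move=> hD; apply/eqP/negPn/negP => uv.
have h1 : (2 * u) * (ln (u + v) - (ln 2 + ln u)) < (u + v) - 2 * u.
  have ne : 2 * u != u + v.
    apply/negP => /eqP h; move/negP: uv; apply; apply/eqP; lra.
  rewrite -ln2x //; apply: key_lt => //; lra.
have [_ h2] := Dv_pos_facts u0 v0.
have e := Dv_ln u v; rewrite hD mul0r in e.
nra.
Qed.

Lemma Dv_le u v : 0 <= u -> 0 <= v -> Dv u v <= u + v.
Proof.
rewrite le0r => /orP[/eqP->|u0]; first by rewrite Dv_0l add0r.
rewrite le0r => /orP[/eqP->|v0]; first by rewrite Dv_0r addr0.
have h1 : ln u <= ln (u + v) by rewrite ler_ln ?posrE //; lra.
have h2 : ln v <= ln (u + v) by rewrite ler_ln ?posrE //; lra.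
have e := Dv_ln u v.
rewrite -(ler_pM2r ln2_gt0) e.
nra.
Qed.

Lemma Dv_eqS u v : 0 <= u -> 0 <= v -> Dv u v = u + v -> u = 0 \/ v = 0.
Proof.
rewrite le0r => /orP[/eqP->|u0]; first by left.
rewrite le0r => /orP[/eqP->|v0]; first by right.
have h1 : ln u < ln (u + v) by rewrite ltr_ln ?posrE //; lra.
have h2 : ln v < ln (u + v) by rewrite ltr_ln ?posrE //; lra.
have e := Dv_ln u v => hD; rewrite hD in e.
exfalso; nra.
Qed.

Lemma Dv_same u : 0 <= u -> Dv u u = 0.
Proof.
rewrite le0r => /orP[/eqP->|u0]; first by rewrite Dv_0l.
have e := Dv_ln u u.
have e2 : ln (u + u) = ln 2 + ln u by rewrite -ln2x //; congr ln; ring.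
rewrite e2 in e.
have : Dv u u * ln 2 = 0 by rewrite e; ring.
move/eqP; rewrite mulf_eq0 => /orP[/eqP //|].
by have := ln2_gt0; rewrite lt0r => /andP[/negPf ->].
Qed.

Lemma Dv_ext u v : u = 0 \/ v = 0 -> Dv u v = u + v.
Proof. by case=> ->; rewrite ?Dv_0l ?Dv_0r ?add0r ?addr0. Qed.

End Analytic.


Section Gen.
Variable R : realType.

Lemma sum_pair (I J : finType) (G : I * J -> R) :
  \sum_(p : I * J) G p = \sum_i \sum_j G (i, j).
Proof. by rewrite pair_bigA; apply: eq_bigr => -[i j]. Qed.

Lemma probOf_pair (T A B : finType) (p : T -> R) (f : T -> A) (g : T -> B) a :
  \sum_b probOf p (fun t => (f t, g t)) (a, b) = probOf p f a.
Proof.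
rewrite /probOf.
under eq_bigr => b _ do rewrite big_mkcond.
rewrite exchange_big /= [RHS]big_mkcond; apply: eq_bigr => t _.
case: (f t =P a) => [->|fa].
- rewrite (bigD1 (g t)) //= xpair_eqE !eqxx /= big1 ?addr0 // => b hb.
  by rewrite xpair_eqE eqxx /= eq_sym (negPf hb).
- by rewrite big1 // => b _; rewrite xpair_eqE (introF eqP fa).
Qed.

Lemma probOf_pair2 (T A B : finType) (p : T -> R) (f : T -> A) (g : T -> B) b :
  \sum_a probOf p (fun t => (f t, g t)) (a, b) = probOf p g b.
Proof.
rewrite /probOf.
under eq_bigr => a _ do rewrite big_mkcond.
rewrite exchange_big /= [RHS]big_mkcond; apply: eq_bigr => t _.
case: (g t =P b) => [->|gb].
- rewrite (bigD1 (f t)) //= xpair_eqE !eqxx /= big1 ?addr0 // => a ha.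
  by rewrite xpair_eqE eqxx andbT eq_sym (negPf ha).
- by rewrite big1 // => a _; rewrite xpair_eqE (introF eqP gb) andbF.
Qed.

Lemma probOf_ge0 (T A : finType) (p : T -> R) (f : T -> A) a :
  (forall t, 0 <= p t) -> 0 <= probOf p f a.
Proof. by move=> hp; apply: sumr_ge0 => t _. Qed.

Lemma mutinfoE (T A B : finType) (p : T -> R) (f : T -> A) (g : T -> B) :
  (forall t, 0 <= p t) ->
  mutinfo p f g = \sum_a \sum_b Fx (probOf p (fun t => (f t, g t)) (a, b))
                  - \sum_a Fx (probOf p f a) - \sum_b Fx (probOf p g b).
Proof.
move=> hp.
have step : forall a b,
  (let pab := probOf p (fun t => (f t, g t)) (a, b) in
    if pab == 0 then 0
    else pab * log2 (pab / (probOf p f a * probOf p g b))) =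
  Fx (probOf p (fun t => (f t, g t)) (a, b))
  - probOf p (fun t => (f t, g t)) (a, b) * log2 (probOf p f a)
  - probOf p (fun t => (f t, g t)) (a, b) * log2 (probOf p g b).
  move=> a b /=.
  set pab := probOf p _ (a, b).
  case: eqP => [->|nz]; first by rewrite Fx0 !mul0r !subr0.
  have pab0 : 0 < pab by rewrite lt0r (probOf_ge0 _ _ hp) andbT; apply/eqP.
  have pa0 : 0 < probOf p f a.
    apply: (lt_le_trans pab0); rewrite -(probOf_pair p f g a) (bigD1 b) //=.
    by rewrite lerDl sumr_ge0 // => *; apply: probOf_ge0.
  have pb0 : 0 < probOf p g b.
    apply: (lt_le_trans pab0); rewrite -(probOf_pair2 p f g b) (bigD1 a) //=.
    by rewrite lerDl sumr_ge0 // => *; apply: probOf_ge0.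
  rewrite /Fx /log2 ln_div ?posrE ?mulr_gt0 // lnM ?posrE //.
  ring.
rewrite /mutinfo.
transitivity (\sum_a \sum_b Fx (probOf p (fun t => (f t, g t)) (a, b))
  - \sum_a \sum_b probOf p (fun t => (f t, g t)) (a, b) * log2 (probOf p f a)
  - \sum_a \sum_b probOf p (fun t => (f t, g t)) (a, b) * log2 (probOf p g b)).
  rewrite -!sumrB; apply: eq_bigr => a _; rewrite -!sumrB.
  by apply: eq_bigr => b _; exact: step.
congr (_ - _ - _).
  by apply: eq_bigr => a _; rewrite -mulr_suml probOf_pair.
by rewrite exchange_big; apply: eq_bigr => b _; rewrite -mulr_suml probOf_pair2.
Qed.

End Gen.


Lemma eqTF : (true == false) = false. Proof. by []. Qed.
Lemma eqFT : (false == true) = false. Proof. by []. Qed.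

Section Mac.
Variable R : realType.
Variable Y : finType.
Variable W : bool -> bool -> Y -> R.
Hypothesis HW : is_MAC W.

Definition q x1 x2 y : R := W x1 x2 y / 4.

Lemma q_ge0 x1 x2 y : 0 <= q x1 x2 y.
Proof. by rewrite /q divr_ge0 //; case: HW. Qed.

Lemma sq x1 x2 : \sum_y q x1 x2 y = 4^-1.
Proof. by rewrite /q -mulr_suml; case: HW => _ ->; rewrite mul1r. Qed.

Lemma macP_ge0 t : 0 <= macP W t.
Proof. exact: q_ge0. Qed.

Lemma sum_if_eq (y0 : Y) (h : Y -> R) :
  \sum_y (if y == y0 then h y else 0) = h y0.
Proof. by rewrite -big_mkcond big_pred1_eq. Qed.

Lemma probOfE (A : finType) (f : bool * bool * Y -> A) a :
  probOf (macP W) f a =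
  \sum_x1 \sum_x2 \sum_y (if f ((x1, x2), y) == a then q x1 x2 y else 0).
Proof. by rewrite /probOf big_mkcond !sum_pair. Qed.

Lemma sum_if_p1 (B : eqType) (b b' : B) (y0 : Y) (h : Y -> R) :
  \sum_y (if (y, b) == (y0, b') then h y else 0) = if b == b' then h y0 else 0.
Proof.
rewrite (eq_bigr (fun y => if b == b' then (if y == y0 then h y else 0) else 0)).
  by case: (b == b') => //; [rewrite sum_if_eq | rewrite big1_eq].
by move=> y _; rewrite xpair_eqE; case: (y == y0); case: (b == b').
Qed.
Lemma sum_if_p2 (B : eqType) (b b' : B) (y0 : Y) (h : Y -> R) :
  \sum_y (if (b, y) == (b', y0) then h y else 0) = if b == b' then h y0 else 0.
Proof.
rewrite (eq_bigr (fun y => if b == b' then (if y == y0 then h y else 0) else 0)).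
  by case: (b == b') => //; [rewrite sum_if_eq | rewrite big1_eq].
by move=> y _; rewrite xpair_eqE; case: (y == y0); case: (b == b').
Qed.
Lemma sum_if_p3 (B1 B2 : eqType) (b1 b1' : B1) (b2 b2' : B2) (y0 : Y) (h : Y -> R) :
  \sum_y (if (b1, (y, b2)) == (b1', (y0, b2')) then h y else 0) =
  if (b1 == b1') && (b2 == b2') then h y0 else 0.
Proof.
rewrite (eq_bigr (fun y => if (b1 == b1') && (b2 == b2') then (if y == y0 then h y else 0) else 0)).
  by case: (_ && _) => //; [rewrite sum_if_eq | rewrite big1_eq].
by move=> y _; rewrite !xpair_eqE; case: (y == y0); case: (b1 == b1'); case: (b2 == b2').
Qed.

Ltac simp := rewrite ?probOfE /rvX1 /rvX2 /rvY /= !big_bool /= ?sum_if_p3 ?sum_if_p1 ?sum_if_p2;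
  rewrite ?xpair_eqE ?eqxx ?eqTF ?eqFT /= ?andbT ?andbF /=
    ?big1_eq ?sum_if_eq ?sq.

Lemma pX1 a : probOf (macP W) (@rvX1 Y) a = 2^-1.
Proof. by case: a; simp; field. Qed.
Lemma pX2 a : probOf (macP W) (@rvX2 Y) a = 2^-1.
Proof. by case: a; simp; field. Qed.
Lemma pX12 a : probOf (macP W) (fun t => (rvX1 t, rvX2 t)) a = 4^-1.
Proof. by case: a => [[] []]; simp; field. Qed.
Lemma pS a : probOf (macP W) (fun t => addb (rvX1 t) (rvX2 t)) a = 2^-1.
Proof. by case: a; simp; field. Qed.
Definition Sy y := q true true y + q false true y + (q true false y + q false false y).
Lemma pY y : probOf (macP W) (@rvY Y) y = Sy y.
Proof. rewrite /Sy; simp; ring. Qed.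
Lemma pYX2 y x2 : probOf (macP W) (fun t => (rvY t, rvX2 t)) (y, x2) =
  q true x2 y + q false x2 y.
Proof. by case: x2; simp; ring. Qed.
Lemma pYX1 y x1 : probOf (macP W) (fun t => (rvY t, rvX1 t)) (y, x1) =
  q x1 true y + q x1 false y.
Proof. by case: x1; simp; ring. Qed.
Lemma pI1 x1 y x2 : probOf (macP W) (fun t => (rvX1 t, (rvY t, rvX2 t))) (x1, (y, x2)) =
  q x1 x2 y.
Proof. by case: x1; case: x2; simp; ring. Qed.
Lemma pI2 x2 y x1 : probOf (macP W) (fun t => (rvX2 t, (rvY t, rvX1 t))) (x2, (y, x1)) =
  q x1 x2 y.
Proof. by case: x1; case: x2; simp; ring. Qed.
Lemma pI3 x1 x2 y : probOf (macP W) (fun t => ((rvX1 t, rvX2 t), rvY t)) ((x1, x2), y) =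
  q x1 x2 y.
Proof. by case: x1; case: x2; simp; ring. Qed.
Lemma pJ1 x1 y : probOf (macP W) (fun t => (rvX1 t, rvY t)) (x1, y) =
  q x1 true y + q x1 false y.
Proof. by case: x1; simp; ring. Qed.
Lemma pJ2 x2 y : probOf (macP W) (fun t => (rvX2 t, rvY t)) (x2, y) =
  q true x2 y + q false x2 y.
Proof. by case: x2; simp; ring. Qed.
Lemma pJ3 s y : probOf (macP W) (fun t => (addb (rvX1 t) (rvX2 t), rvY t)) (s, y) =
  if s then q true false y + q false true y else q true true y + q false false y.
Proof. by case: s; simp; ring. Qed.


Lemma ln4 : ln (4 : R) = 2 * ln 2.
Proof. by rewrite -[4](_ : 2 * 2 = _) ?lnM ?posrE //; [ring | lra]. Qed.

Lemma Fx2 : Fx (2^-1 : R) = - 2^-1.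
Proof.
have h := @ln2_gt0 R.
rewrite /Fx /log2 lnV ?posrE //; field; exact: lt0r_neq0.
Qed.

Lemma Fx4 : Fx (4^-1 : R) = - 2^-1.
Proof.
have h := @ln2_gt0 R.
rewrite /Fx /log2 lnV ?posrE // ln4; field; exact: lt0r_neq0.
Qed.

Lemma sumS : \sum_y Sy y = 1.
Proof. by rewrite /Sy !big_split /= !sq; field. Qed.

Lemma M_X1 : \sum_a Fx (probOf (macP W) (@rvX1 Y) a) = - \sum_y Sy y.
Proof. by rewrite big_bool /= !pX1 Fx2 sumS; field. Qed.

Lemma I1E : mutinfo (macP W) (@rvX1 Y) (fun t => (rvY t, rvX2 t)) =
  \sum_y (Dv (q true true y) (q false true y) + Dv (q true false y) (q false false y)).
Proof.
rewrite mutinfoE; last exact: macP_ge0.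
rewrite big_bool /= !sum_pair -big_split /=.
rewrite big_bool /= !pX1 Fx2.
under eq_bigr => y _ do rewrite !big_bool /= !pI1.
under [X in _ - _ - X]eq_bigr => y _ do rewrite !big_bool /= !pYX2.
have -> : (- 2^-1 - 2^-1 : R) = - \sum_y Sy y by rewrite sumS; field.
rewrite opprK -big_split -sumrB; apply: eq_bigr => y _.
rewrite /Dv /Sy /=; ring.
Qed.

Lemma M_X2 : \sum_a Fx (probOf (macP W) (@rvX2 Y) a) = - \sum_y Sy y.
Proof. by rewrite big_bool /= !pX2 Fx2 sumS; field. Qed.
Lemma M_X12 : \sum_a Fx (probOf (macP W) (fun t => (rvX1 t, rvX2 t)) a) = - (2 * \sum_y Sy y).
Proof. by rewrite sum_pair !big_bool /= !pX12 Fx4 sumS; field. Qed.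
Lemma M_S : \sum_a Fx (probOf (macP W) (fun t => addb (rvX1 t) (rvX2 t)) a) = - \sum_y Sy y.
Proof. by rewrite big_bool /= !pS Fx2 sumS; field. Qed.

Lemma I2E : mutinfo (macP W) (@rvX2 Y) (fun t => (rvY t, rvX1 t)) =
  \sum_y (Dv (q true true y) (q true false y) + Dv (q false true y) (q false false y)).
Proof.
rewrite mutinfoE; last exact: macP_ge0.
rewrite M_X2 big_bool /= !sum_pair -big_split /=.
under eq_bigr => y _ do rewrite !big_bool /= !pI2.
under [X in _ - _ - X]eq_bigr => y _ do rewrite !big_bool /= !pYX1.
rewrite opprK -big_split -sumrB; apply: eq_bigr => y _.
rewrite /Dv /Sy /=; ring.
Qed.

Lemma I3E : mutinfo (macP W) (fun t => (rvX1 t, rvX2 t)) (@rvY Y) =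
  \sum_y (Dv (q true true y) (q false true y) + Dv (q true false y) (q false false y)
          + Dv (q true true y + q false true y) (q true false y + q false false y)).
Proof.
rewrite mutinfoE; last exact: macP_ge0.
rewrite M_X12 sum_pair !big_bool /= -!big_split /=.
under eq_bigr => y _ do rewrite !pI3.
under [X in _ - _ - X]eq_bigr => y _ do rewrite pY.
rewrite opprK mulr_sumr -big_split -sumrB; apply: eq_bigr => y _.
rewrite /Dv /Sy /=; ring.
Qed.

Lemma J1E : mutinfo (macP W) (@rvX1 Y) (@rvY Y) =
  \sum_y Dv (q true true y + q true false y) (q false true y + q false false y).
Proof.
rewrite mutinfoE; last exact: macP_ge0.
rewrite M_X1 big_bool /= -big_split /=.
under eq_bigr => y _ do rewrite !pJ1.
under [X in _ - _ - X]eq_bigr => y _ do rewrite pY.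
rewrite opprK -big_split -sumrB; apply: eq_bigr => y _.
rewrite /Dv /Sy /=.
have -> : q true true y + q true false y + (q false true y + q false false y) =
  q true true y + q false true y + (q true false y + q false false y) by ring.
ring.
Qed.

Lemma J2E : mutinfo (macP W) (@rvX2 Y) (@rvY Y) =
  \sum_y Dv (q true true y + q false true y) (q true false y + q false false y).
Proof.
rewrite mutinfoE; last exact: macP_ge0.
rewrite M_X2 big_bool /= -big_split /=.
under eq_bigr => y _ do rewrite !pJ2.
under [X in _ - _ - X]eq_bigr => y _ do rewrite pY.
rewrite opprK -big_split -sumrB; apply: eq_bigr => y _.
rewrite /Dv /Sy /=; ring.
Qed.

Lemma J3E : mutinfo (macP W) (fun t => addb (rvX1 t) (rvX2 t)) (@rvY Y) =
  \sum_y Dv (q true false y + q false true y) (q true true y + q false false y).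
Proof.
rewrite mutinfoE; last exact: macP_ge0.
rewrite M_S big_bool /= -big_split /=.
under eq_bigr => y _ do rewrite !pJ3.
under [X in _ - _ - X]eq_bigr => y _ do rewrite pY.
rewrite opprK -big_split -sumrB; apply: eq_bigr => y _.
rewrite /Dv /Sy /=.
have -> : q true false y + q false true y + (q true true y + q false false y) =
  q true true y + q false true y + (q true false y + q false false y) by ring.
ring.
Qed.

End Mac.


Section Logic.
Variable R : realType.
Variable Y : finType.
Implicit Types (u v w z e s : Y -> R).

Lemma sum_eq0_ptw e : (forall y, 0 <= e y) -> \sum_y e y = 0 -> forall y, e y = 0.
Proof.
move=> h0 hs y; exact: (psumr_eq0P (fun i _ => h0 i) hs).
Qed.

Lemma sum_eq_ptw e s : (forall y, e y <= s y) -> \sum_y e y = \sum_y s y ->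
  forall y, e y = s y.
Proof.
move=> hle hs y.
have := @sum_eq0_ptw (fun y => s y - e y).
move=> /(_ _ _ y) H.
suff : s y - e y = 0 by lra.
apply: H; first by move=> i; have := hle i; lra.
by rewrite sumrB hs subrr.
Qed.

Definition nn u := forall y, 0 <= u y.

Lemma P0 u v w z : nn u -> nn v -> nn w -> nn z ->
  \sum_y (Dv (u y) (v y) + Dv (w y) (z y)) = 0 -> forall y, u y = v y /\ w y = z y.
Proof.
move=> hu hv hw hz hs y.
have h1 := Dv_ge0 (hu y) (hv y); have h2 := Dv_ge0 (hw y) (hz y).
have := sum_eq0_ptw (fun y => addr_ge0 (Dv_ge0 (hu y) (hv y)) (Dv_ge0 (hw y) (hz y))) hs y.
move=> e; split; apply: Dv_eq0 => //; lra.
Qed.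

Lemma P1 u v w z : nn u -> nn v -> nn w -> nn z ->
  \sum_y (u y + v y + (w y + z y)) = 1 ->
  \sum_y (Dv (u y) (v y) + Dv (w y) (z y)) = 1 ->
  forall y, (u y = 0 \/ v y = 0) /\ (w y = 0 \/ z y = 0).
Proof.
move=> hu hv hw hz hS hs y.
have h1 := Dv_le (hu y) (hv y); have h2 := Dv_le (hw y) (hz y).
have e := sum_eq_ptw (s := fun y => u y + v y + (w y + z y))
  (fun y => lerD (Dv_le (hu y) (hv y)) (Dv_le (hw y) (hz y))) (etrans hs (esym hS)) y.
split; apply: Dv_eqS => //; lra.
Qed.

Lemma Q0 u v w z : nn u -> nn w ->
  (forall y, u y = v y /\ w y = z y) -> \sum_y (Dv (u y) (v y) + Dv (w y) (z y)) = 0.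
Proof.
move=> hu hw h; rewrite big1 // => y _; case: (h y) => <- <-.
by rewrite !Dv_same // addr0.
Qed.

Lemma Q1 u v w z :
  \sum_y (u y + v y + (w y + z y)) = 1 ->
  (forall y, (u y = 0 \/ v y = 0) /\ (w y = 0 \/ z y = 0)) ->
  \sum_y (Dv (u y) (v y) + Dv (w y) (z y)) = 1.
Proof.
move=> hS h; rewrite -hS; apply: eq_bigr => y _; case: (h y) => h1 h2.
by rewrite !Dv_ext.
Qed.

Lemma S0 u v : nn u -> nn v -> \sum_y Dv (u y) (v y) = 0 -> forall y, u y = v y.
Proof.
move=> hu hv hs y; apply: Dv_eq0 => //.
exact: (sum_eq0_ptw (fun y => Dv_ge0 (hu y) (hv y)) hs).
Qed.

Lemma S1 u v : nn u -> nn v -> \sum_y (u y + v y) = 1 -> \sum_y Dv (u y) (v y) = 1 ->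
  forall y, u y = 0 \/ v y = 0.
Proof.
move=> hu hv hS hs y; apply: Dv_eqS => //.
exact: (sum_eq_ptw (s := fun y => u y + v y) (fun y => Dv_le (hu y) (hv y))
   (etrans hs (esym hS))).
Qed.

Lemma T0 u v : nn u -> (forall y, u y = v y) -> \sum_y Dv (u y) (v y) = 0.
Proof. by move=> hu h; rewrite big1 // => y _; rewrite -h Dv_same. Qed.

Lemma T1 u v : \sum_y (u y + v y) = 1 -> (forall y, u y = 0 \/ v y = 0) ->
  \sum_y Dv (u y) (v y) = 1.
Proof. by move=> hS h; rewrite -hS; apply: eq_bigr => y _; rewrite Dv_ext. Qed.

Lemma B2 u v w z : nn u -> nn v -> nn w -> nn z ->
  \sum_y (u y + v y + (w y + z y)) = 1 ->
  0 <= \sum_y (Dv (u y) (v y) + Dv (w y) (z y)) <= 1.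
Proof.
move=> hu hv hw hz hS; apply/andP; split.
  by apply: sumr_ge0 => y _; apply: addr_ge0; apply: Dv_ge0.
rewrite -hS; apply: ler_sum => y _; apply: lerD; exact: Dv_le.
Qed.

Lemma B1 u v : nn u -> nn v -> \sum_y (u y + v y) = 1 ->
  0 <= \sum_y Dv (u y) (v y) <= 1.
Proof.
move=> hu hv hS; apply/andP; split.
  by apply: sumr_ge0 => y _; apply: Dv_ge0.
rewrite -hS; apply: ler_sum => y _; exact: Dv_le.
Qed.

End Logic.


Section Ints.
Variable R : realType.
Lemma isInt_sub (x y : R) : isInt x -> isInt y -> isInt (x - y).
Proof. by move=> [a ->] [b ->]; exists (a - b); rewrite intrB. Qed.
Lemma isInt_mul (x y : R) : isInt x -> isInt y -> isInt (x * y).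
Proof. by move=> [a ->] [b ->]; exists (a * b); rewrite intrM. Qed.
Lemma isInt_add (x y : R) : isInt x -> isInt y -> isInt (x + y).
Proof. by move=> [a ->] [b ->]; exists (a + b); rewrite intrD. Qed.
Lemma isInt0 : isInt (0 : R). Proof. by exists 0. Qed.
Lemma isInt1 : isInt (1 : R). Proof. by exists 1. Qed.
Lemma is01_int (x : R) : is01 x -> isInt x.
Proof. by case=> ->; [exact: isInt0 | exact: isInt1]. Qed.
Lemma int01 (x : R) : isInt x -> 0 <= x <= 1 -> x = 0 \/ x = 1.
Proof.
move=> [a ->] /andP[]; rewrite ler0z lerz1.
by case: a => [[|[|n]]|n] //= _ _; [left | right].
Qed.
End Ints.

Section Main.
Variable R : realType.
Variable Y : finType.
Variables A B C D : Y -> R.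
Hypotheses (hA : nn A) (hB : nn B) (hC : nn C) (hD : nn D).
Hypothesis hS : \sum_y (A y + C y + (B y + D y)) = 1.

Definition i1 := \sum_y (Dv (A y) (C y) + Dv (B y) (D y)).
Definition i2 := \sum_y (Dv (A y) (B y) + Dv (C y) (D y)).
Definition i3 := \sum_y (Dv (A y) (C y) + Dv (B y) (D y) + Dv (A y + C y) (B y + D y)).
Definition j1 := \sum_y Dv (A y + B y) (C y + D y).
Definition j2 := \sum_y Dv (A y + C y) (B y + D y).
Definition j3 := \sum_y Dv (B y + C y) (A y + D y).

Lemma hS2 : \sum_y (A y + B y + (C y + D y)) = 1.
Proof. by rewrite -hS; apply: eq_bigr => y _; ring. Qed.
Lemma hS3 : \sum_y (B y + C y + (A y + D y)) = 1.
Proof. by rewrite -hS; apply: eq_bigr => y _; ring. Qed.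

Lemma nnD (u v : Y -> R) : nn u -> nn v -> nn (fun y => u y + v y).
Proof. by move=> hu hv y; apply: addr_ge0. Qed.

Lemma i3_1 : i3 = i1 + j2.
Proof. by rewrite /i3 big_split. Qed.

Lemma i3_2 : i3 = i2 + j1.
Proof.
rewrite /i3 /i2 /j1 -big_split; apply: eq_bigr => y _; rewrite /Dv /=.
have -> : A y + B y + (C y + D y) = A y + C y + (B y + D y) by ring.
ring.
Qed.

Lemma bi1 : 0 <= i1 <= 1. Proof. exact: B2. Qed.
Lemma bi2 : 0 <= i2 <= 1. Proof. exact: (B2 hA hB hC hD hS2). Qed.
Lemma bj1 : 0 <= j1 <= 1.
Proof. exact: (B1 (nnD hA hB) (nnD hC hD) hS2). Qed.
Lemma bj2 : 0 <= j2 <= 1.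
Proof. exact: (B1 (nnD hA hC) (nnD hB hD) hS). Qed.
Lemma bj3 : 0 <= j3 <= 1.
Proof. exact: (B1 (nnD hB hC) (nnD hA hD) hS3). Qed.

Lemma j3_val : (i1 = 0 \/ i1 = 1) -> (i2 = 0 \/ i2 = 1) -> j3 = i1 * i2.
Proof.
move=> h1 h2.
case: h1 => e1.
  have P := P0 hA hC hB hD e1.
  rewrite e1 mul0r; apply: T0 => [|y]; first exact: nnD.
  by case: (P y) => -> ->; ring.
case: h2 => e2.
  have P := P0 hA hB hC hD e2.
  rewrite e2 mulr0; apply: T0 => [|y]; first exact: nnD.
  by case: (P y) => -> ->; ring.
have P := P1 hA hC hB hD hS e1.
have Q := P1 hA hB hC hD hS2 e2.
rewrite e1 e2 mulr1; apply: (@T1 _ _ (fun y => B y + C y) (fun y => A y + D y) hS3) => y.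
case: (P y) => PA PB; case: (Q y) => QA QB.
by case: PA => ?; case: PB => ?; case: QA => ?; case: QB => ?;
  first [left; lra | right; lra].
Qed.

Lemma M1 : isInt i1 -> isInt i2 -> isInt i3 ->
  [/\ is01 j1, is01 j2 & is01 j3] /\
  [/\ j1 = i3 - i2, j2 = i3 - i1 & j3 = i1 * i2].
Proof.
move=> I1 I2 I3.
have h1 := int01 I1 bi1; have h2 := int01 I2 bi2.
have ej1 : j1 = i3 - i2 by rewrite i3_2; ring.
have ej2 : j2 = i3 - i1 by rewrite i3_1; ring.
have ej3 := j3_val h1 h2.
split; split => //.
- by apply: int01 bj1; rewrite ej1; apply: isInt_sub.
- by apply: int01 bj2; rewrite ej2; apply: isInt_sub.
- by rewrite /is01 ej3; case: h1 => ->; case: h2 => ->;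
    [left; ring | left; ring | left; ring | right; ring].
Qed.

Ltac splitall := repeat match goal with H : _ \/ _ |- _ => case: H => H end.

Lemma M3 : is01 j1 -> is01 j2 -> is01 j3 -> i3 = j1 + j2 + (1 - j1) * (1 - j2) * j3.
Proof.
move=> [e1|e1] [e2|e2] h3.
- have E1 := S0 (nnD hA hB) (nnD hC hD) e1.
  have E2 := S0 (nnD hA hC) (nnD hB hD) e2.
  case: h3 => e3.
  + have E3 := S0 (nnD hB hC) (nnD hA hD) e3.
    have ei : i1 = 0.
      rewrite /i1; apply: (Q0 hA hB) => y; have := E1 y; have := E2 y; have := E3 y; move=> /= *.
      split; lra.
    by rewrite i3_1 ei e1 e2 e3; ring.
  + have E3 := S1 (nnD hB hC) (nnD hA hD) hS3 e3.
    have ei : i1 = 1.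
      rewrite /i1; apply: (Q1 hS) => y; have := E1 y; have := E2 y; have := E3 y => /= h3' h2' h1'.
      have := hA y; have := hB y; have := hC y; have := hD y => *.
      by splitall; split; first [left; lra | right; lra].
    by rewrite i3_1 ei e1 e2 e3; ring.
- have E1 := S0 (nnD hA hB) (nnD hC hD) e1.
  have E2 := S1 (nnD hA hC) (nnD hB hD) hS e2.
  have ei : i1 = 0.
    rewrite /i1; apply: (Q0 hA hB) => y; have := E1 y; have := E2 y => /= h2' h1'.
    have := hA y; have := hB y; have := hC y; have := hD y => *.
    by splitall; split; lra.
  by rewrite i3_1 ei e1 e2; ring.
- have E1 := S1 (nnD hA hB) (nnD hC hD) hS2 e1.
  have E2 := S0 (nnD hA hC) (nnD hB hD) e2.
  have ei : i2 = 0.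
    rewrite /i2; apply: (Q0 hA hC) => y; have := E1 y; have := E2 y => /= h2' h1'.
    have := hA y; have := hB y; have := hC y; have := hD y => *.
    by splitall; split; lra.
  by rewrite i3_2 ei e1 e2; ring.
- have E1 := S1 (nnD hA hB) (nnD hC hD) hS2 e1.
  have E2 := S1 (nnD hA hC) (nnD hB hD) hS e2.
  have ei : i1 = 1.
    rewrite /i1; apply: (Q1 hS) => y; have := E1 y; have := E2 y => /= h2' h1'.
    have := hA y; have := hB y; have := hC y; have := hD y => *.
    by splitall; split; first [left; lra | right; lra].
  by rewrite i3_1 ei e1 e2; ring.
Qed.

End Main.


Section Fin.
Variable R : realType.

Lemma ItripleE (Y : finType) (W : bool -> bool -> Y -> R) : is_MAC W ->
  Itriple W = (i1 (q W true true) (q W true false) (q W false true) (q W false false),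
               i2 (q W true true) (q W true false) (q W false true) (q W false false),
               i3 (q W true true) (q W true false) (q W false true) (q W false false)).
Proof. by move=> HW; rewrite /Itriple (I1E HW) (I2E HW) (I3E HW). Qed.

Lemma JtripleE (Y : finType) (W : bool -> bool -> Y -> R) : is_MAC W ->
  Jtriple W = (j1 (q W true true) (q W true false) (q W false true) (q W false false),
               j2 (q W true true) (q W true false) (q W false true) (q W false false),
               j3 (q W true true) (q W true false) (q W false true) (q W false false)).
Proof. by move=> HW; rewrite /Jtriple (J1E HW) (J2E HW) (J3E HW). Qed.

Lemma M1W (Y : finType) (W : bool -> bool -> Y -> R) : is_MAC W ->
  let A := q W true true in let B := q W true false in
  let C := q W false true in let D := q W false false in
  isInt (i1 A B C D) -> isInt (i2 A B C D) -> isInt (i3 A B C D) ->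
  [/\ is01 (j1 A B C D), is01 (j2 A B C D) & is01 (j3 A B C D)] /\
  [/\ j1 A B C D = i3 A B C D - i2 A B C D, j2 A B C D = i3 A B C D - i1 A B C D
    & j3 A B C D = i1 A B C D * i2 A B C D].
Proof.
move=> HW A B C D; apply: M1; try (move=> y; exact: q_ge0).
by have := sumS HW; rewrite /Sy.
Qed.

Lemma M3W (Y : finType) (W : bool -> bool -> Y -> R) : is_MAC W ->
  let A := q W true true in let B := q W true false in
  let C := q W false true in let D := q W false false in
  is01 (j1 A B C D) -> is01 (j2 A B C D) -> is01 (j3 A B C D) ->
  [/\ i3 A B C D = j1 A B C D + j2 A B C D + (1 - j1 A B C D) * (1 - j2 A B C D) * j3 A B C D,
      i1 A B C D = i3 A B C D - j2 A B C D
    & i2 A B C D = i3 A B C D - j1 A B C D].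
Proof.
move=> HW A B C D h1 h2 h3; split.
- apply: M3; try (move=> y; exact: q_ge0); try done.
  by have := sumS HW; rewrite /Sy.
- by rewrite i3_1; ring.
- by rewrite i3_2; ring.
Qed.

End Fin.

Unset Implicit Arguments.

Theorem mainTheorem4 (R : realType) :
  (* integer I  ==>  J in {0,1}^3 *)
  (forall (Y : finType) (W : bool -> bool -> Y -> R),
     is_MAC W -> triple_all (@isInt R) (Itriple W) ->
     triple_all (@is01 R) (Jtriple W)) /\
  (* integer I determines J *)
  (forall (Y1 Y2 : finType) (W1 : bool -> bool -> Y1 -> R)
          (W2 : bool -> bool -> Y2 -> R),
     is_MAC W1 -> is_MAC W2 -> triple_all (@isInt R) (Itriple W1) ->
     Itriple W1 = Itriple W2 -> Jtriple W1 = Jtriple W2) /\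
  (* J in {0,1}^3  ==>  integer I *)
  (forall (Y : finType) (W : bool -> bool -> Y -> R),
     is_MAC W -> triple_all (@is01 R) (Jtriple W) ->
     triple_all (@isInt R) (Itriple W)) /\
  (* J in {0,1}^3 determines I *)
  (forall (Y1 Y2 : finType) (W1 : bool -> bool -> Y1 -> R)
          (W2 : bool -> bool -> Y2 -> R),
     is_MAC W1 -> is_MAC W2 -> triple_all (@is01 R) (Jtriple W1) ->
     Jtriple W1 = Jtriple W2 -> Itriple W1 = Itriple W2).
Proof.
split; [|split; [|split]].
- move=> Y W HW; rewrite /triple_all (ItripleE HW) (JtripleE HW) /= => -[I1 I2 I3].
  by have [[]] := M1W HW I1 I2 I3.
- move=> Y1 Y2 W1 W2 H1 H2; rewrite /triple_all (ItripleE H1) (ItripleE H2)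
    (JtripleE H1) (JtripleE H2) /= => -[I1 I2 I3] [e1 e2 e3].
  have [_ [f1 f2 f3]] := M1W H1 I1 I2 I3.
  rewrite e1 e2 e3 in I1 I2 I3.
  have [_ [g1 g2 g3]] := M1W H2 I1 I2 I3.
  by rewrite f1 f2 f3 g1 g2 g3 e1 e2 e3.
- move=> Y W HW; rewrite /triple_all (ItripleE HW) (JtripleE HW) /= => -[J1 J2 J3].
  have [e3 e1 e2] := M3W HW J1 J2 J3.
  have I3 : isInt (i3 (q W true true) (q W true false) (q W false true) (q W false false)).
    rewrite e3; apply: isInt_add; first (apply: isInt_add; exact: is01_int).
    apply: isInt_mul; last exact: is01_int.
    by apply: isInt_mul; apply: isInt_sub; [exact: isInt1 | exact: is01_int
      | exact: isInt1 | exact: is01_int].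
  split => //; [rewrite e1 | rewrite e2]; apply: isInt_sub => //; exact: is01_int.
- move=> Y1 Y2 W1 W2 H1 H2; rewrite /triple_all (ItripleE H1) (ItripleE H2)
    (JtripleE H1) (JtripleE H2) /= => -[J1 J2 J3] [e1 e2 e3].
  have [f3 f1 f2] := M3W H1 J1 J2 J3.
  rewrite e1 e2 e3 in J1 J2 J3.
  have [g3 g1 g2] := M3W H2 J1 J2 J3.
  by rewrite f1 f2 g1 g2 f3 g3 e1 e2 e3.
Qed.
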